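(* Let $(c_{a,b})_{(a,b)\in I}$ be arbitrary real numbers indexed by $I=\{(a,b): b=1,2,\dots;\ a=b+1,\dots,2b\}$, and let $\beta=\sum_{n\ge1}\alpha_n s^n$ be the unique formal power series in $s$ (with zero constant term) satisfying \[ \beta=s\Big[1+\sum_{(a,b)\in I}c_{a,b}\,\beta^a s^{b-a}\Big]. \] Then, with $\mathbb N=\{0,1,2,\dots\}$ and $S_n:=\{(n_{a,b})\in\mathbb N^I: n=1+\sum_{I} b\,n_{a,b}\}$, \[ \alpha_n=\sum_{(n_{a,b})\in S_n}\frac{\big[\sum_I a\,n_{a,b}\big]!}{\big[\prod_I n_{a,b}!\big]\,\big[1+\sum_I (a-1)n_{a,b}\big]!}\prod_I c_{a,b}^{\,n_{a,b}}. \]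
   Context: Only finitely many $n_{a,b}$ are nonzero for elements of $S_n$, so all sums and products are finite. Note $b-a<0$ on $I$ but since $a\le 2b$ the right side of the defining equation, after substituting a series $\beta=s+O(s^2)$, is a well-defined formal power series in $s$. *)

(* Defs.v *)
From HB Require Import structures.
From mathcomp Require Import all_boot all_order all_algebra.
Set Implicit Arguments. Unset Strict Implicit. Unset Printing Implicit Defensive.
Import Order.TTheory GRing.Theory Num.Theory.
Local Open Scope ring_scope.

(* Formal power series over R are represented by coefficient sequences nat -> R. *)

Definition mulps (R : nzRingType) (f g : nat -> R) : nat -> R :=
  fun k => \sum_(i < k.+1) f i * g (k - i)%N.

Definition oneps (R : nzRingType) : nat -> R := fun k => (k == 0%N)%:R.

Definition powps (R : nzRingType) (f : nat -> R) (a : nat) : nat -> R :=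
  iter a (mulps f) (oneps R).

Definition inI (a b : nat) : bool := (0 < b)%N && (b < a <= 2 * b)%N.

(* Coefficient of s^n in  s * [1 + sum_{(a,b) in I} c_{a,b} beta^a s^(b-a)],
   where beta has coefficients alpha (alpha 0 = 0).  The coefficient of s^n
   in s * beta^a * s^(b-a) is the coefficient of s^(n-1+a-b) in beta^a; since
   beta^a has order >= a (alpha 0 = 0), only the (finitely many) terms with
   b <= n-1 can contribute, and those have n-1+a-b >= 0. *)
Definition rhs_coef (R : nzRingType) (c : nat -> nat -> R) (alpha : nat -> R)
  (n : nat) : R :=
  (n == 1%N)%:R +
  \sum_(1 <= b < n) \sum_(b.+1 <= a < (2 * b).+1)
     c a b * powps alpha a (n.-1 + a - b)%N.

Definition solves_eq (R : nzRingType) (c : nat -> nat -> R) (alpha : nat -> R) :=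
  alpha 0%N = 0 /\ forall n, alpha n = rhs_coef c alpha n.

(* S_n: families (n_{a,b})_{(a,b) in I} of naturals with n = 1 + sum b n_{a,b}.
   Any such family has n_{a,b} = 0 unless b <= n-1 (so a <= 2n), and all
   n_{a,b} <= n; hence it is encoded faithfully as a finite function on
   'I_(2n+1) x 'I_(n+1) with values in 'I_(n+1), vanishing off I. *)
Definition Idx (n : nat) : finType := ('I_(2 * n).+1 * 'I_n.+1)%type.

Definition Sn (n : nat) : {set {ffun Idx n -> 'I_n.+1}} :=
  [set f : {ffun Idx n -> 'I_n.+1} |
     [forall p : Idx n, ~~ inI p.1 p.2 ==> (val (f p) == 0%N)] &&
     ((1 + \sum_(p : Idx n | inI p.1 p.2) p.2 * f p)%N == n)].

Definition alpha_formula (R : fieldType) (c : nat -> nat -> R) (n : nat) : R :=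
  \sum_(f in Sn n)
    (((\sum_(p : Idx n | inI p.1 p.2) p.1 * f p)%N`!)%:R /
      (((\prod_(p : Idx n | inI p.1 p.2) (f p)`!)%N)%:R *
       ((1 + \sum_(p : Idx n | inI p.1 p.2) (p.1 - 1) * f p)%N`!)%:R) *
     \prod_(p : Idx n | inI p.1 p.2) c p.1 p.2 ^+ f p).

(* Main.v *)
Require Import Defs.
From HB Require Import structures.
From mathcomp Require Import all_boot all_order all_algebra.
From Stdlib Require Import Lia.
Set Implicit Arguments. Unset Strict Implicit. Unset Printing Implicit Defensive.
Import Order.TTheory GRing.Theory Num.Theory.
Local Open Scope ring_scope.


Lemma zleq m n : (m <= n)%coq_nat -> (m <= n)%N. Proof. by move/ssrnat.leP. Qed.
Lemma zleqH m n : (m <= n)%N -> (m <= n)%coq_nat. Proof. by move/ssrnat.leP. Qed.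
Ltac zz := repeat match goal with H : is_true _ |- _ => revert H end;
  unfold subn, addn, muln in *;
  repeat (match goal with |- is_true (_ <= _)%N -> _ => move/zleqH | |- _ -> _ => intro end);
  try apply: zleq; lia.
Ltac zzn := repeat match goal with H : is_true _ |- _ => revert H end;
  unfold subn, addn, muln in *;
  repeat (match goal with |- is_true (_ <= _)%N -> _ => move/zleqH | |- _ -> _ => intro end);
  try apply: zleq; nia.

Section PS.
Variable R : realFieldType.
Implicit Types f g h : nat -> R.

Definition pk f k : {poly R} := \poly_(i < k.+1) f i.

Lemma coefM_truncl (p p' q : {poly R}) k :
  (forall i, (i <= k)%N -> p`_i = p'`_i) -> (p * q)`_k = (p' * q)`_k.
Proof. move=> H; rewrite !coefM; apply: eq_bigr => i _; rewrite H //; have := ltn_ord i.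
zz. Qed.

Lemma coefM_truncr (p p' q : {poly R}) k :
  (forall i, (i <= k)%N -> p`_i = p'`_i) -> (q * p)`_k = (q * p')`_k.
Proof. move=> H; rewrite !coefM; apply: eq_bigr => i _; by rewrite H // leq_subr. Qed.

Lemma mulps_poly f g k : mulps f g k = (pk f k * pk g k)`_k.
Proof.
rewrite coefM /mulps; apply: eq_bigr => i _.
by rewrite !coef_poly ltn_ord ltnS leq_subr.
Qed.

Lemma pk_le f i k : (i <= k)%N -> forall j, (j <= i)%N -> (pk f i)`_j = (pk f k)`_j.
Proof. move=> Hik j Hj; rewrite !coef_poly !ltnS Hj; have -> : (j <= k)%N by zz. by []. Qed.

Lemma pk_mulps g h k i : (i <= k)%N -> (pk (mulps g h) k)`_i = (pk g k * pk h k)`_i.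
Proof.
move=> Hi; rewrite coef_poly ltnS Hi mulps_poly.
rewrite (coefM_truncl (p' := pk g k)); last by apply: pk_le.
by rewrite (coefM_truncr (p' := pk h k)); last by apply: pk_le.
Qed.

Lemma mulpsA f g h k : mulps f (mulps g h) k = mulps (mulps f g) h k.
Proof.
rewrite !mulps_poly (coefM_truncr (p' := pk g k * pk h k)); last first.
 move=> i Hi. exact: (pk_mulps g h Hi).
rewrite (coefM_truncl (p := pk (mulps f g) k) (p' := pk f k * pk g k)); last by move=> i; apply: pk_mulps.
by rewrite mulrA.
Qed.

Lemma mulps_eqr f g g' k : (forall j, (j <= k)%N -> g j = g' j) -> mulps f g k = mulps f g' k.
Proof. move=> H; apply: eq_bigr => i _; by rewrite H // leq_subr. Qed.

Lemma mul1ps g k : mulps (oneps R) g k = g k.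
Proof.
rewrite /mulps big_ord_recl /= /oneps /= mul1r subn0 big1 ?addr0 // => i _.
by rewrite mul0r.
Qed.

Lemma mulps1 g k : mulps g (oneps R) k = g k.
Proof.
rewrite /mulps big_ord_recr /= /oneps subnn /= mulr1 big1 ?add0r // => i _.
rewrite /=; have -> : (k - i == 0)%N = false by apply/negbTE; rewrite subn_eq0 -ltnNge ltn_ord.
by rewrite mulr0.
Qed.

Lemma powps_add (u : nat -> R) a r k : mulps (powps u a) (powps u r) k = powps u (a + r) k.
Proof.
elim: a k => [|a IH] k; first by rewrite mul1ps.
rewrite addSn /= -mulpsA; apply: mulps_eqr => j _; exact: IH.
Qed.

Lemma mulps_sh1 f g k : f 0%N = 0 -> mulps f g k.+1 = mulps (fun i => f i.+1) g k.
Proof.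
move=> H; rewrite /mulps big_ord_recl /= H mul0r add0r; apply: eq_bigr => i _.
by rewrite /bump /= add1n subSS.
Qed.

Lemma mulps_shr f g r k : (forall j, (j < r)%N -> g j = 0) ->
  mulps f g (k + r) = mulps f (fun j => g (j + r)%N) k.
Proof.
move=> H; rewrite /mulps -addSn big_split_ord /= [X in _ + X]big1 ?addr0.
  apply: eq_bigr => i _; congr (_ * g _); have := ltn_ord i; zz.
move=> i _; rewrite H ?mulr0 //; have := ltn_ord i.
zz.
Qed.

Lemma powps_shift (alpha : nat -> R) : alpha 0%N = 0 -> forall r,
  (forall k, powps alpha r (k + r) = powps (fun i => alpha i.+1) r k) /\
  (forall j, (j < r)%N -> powps alpha r j = 0).
Proof.
move=> H0; elim=> [|r [IH1 IH2]].
  by split=> // k; rewrite addn0.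
split.
  move=> k; rewrite addnS /= mulps_sh1 // mulps_shr //.
  by apply: mulps_eqr => j _; rewrite IH1.
move=> j Hj /=; rewrite /mulps big1 // => i _.
case: (posnP i) => [->|Hi]; first by rewrite H0 mul0r.
rewrite IH2 ?mulr0 //; have := ltn_ord i; zz.
Qed.

End PS.



Section H.
Variable R : realFieldType.
Variable c : nat -> nat -> R.
Variable alpha : nat -> R.
Hypothesis Hs : solves_eq c alpha.
Definition ush (f : nat -> R) := fun i => f i.+1.
Arguments ush : simpl never.
Local Notation u := (ush alpha).

Lemma u_eq k : u k = (k == 0%N)%:R + \sum_(1 <= b < k.+1) \sum_(b.+1 <= a < (2*b).+1)
   c a b * powps u a (k - b).
Proof.
case: Hs => H0 Hr; rewrite /ush Hr /rhs_coef eqSS; congr (_ + _).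
apply: eq_big_nat => b /andP [_ Hb]; apply: eq_big_nat => a _.
have -> : (k.+1.-1 + a - b = (k - b) + a)%N by zz.
by rewrite (proj1 (powps_shift H0 a)).
Qed.

Lemma big_nat_condT (F : nat -> R) m n (P : pred nat) : (forall i, (m <= i < n)%N -> P i) ->
  \sum_(m <= i < n | P i) F i = \sum_(m <= i < n) F i.
Proof.
move=> H; rewrite big_nat_cond [RHS]big_nat_cond; apply: eq_bigl => i.
by case: (boolP (m <= i < n)%N) => //= /H ->.
Qed.

Lemma H_rec r n : powps u r.+1 n = powps u r n +
  \sum_(1 <= b < n.+1) \sum_(b.+1 <= a < (2*b).+1) c a b * powps u (a + r) (n - b).
Proof.
rewrite /= /mulps.
rewrite (eq_bigr (fun i : 'I_n.+1 => (nat_of_ord i == 0%N)%:R * powps u r (n - i) + (\sum_(1 <= b < i.+1) \sum_(b.+1 <= a < (2*b).+1) c a b * powps u a (i - b)) * powps u r (n - i))); last first.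
  by move=> i _; rewrite u_eq mulrDl.
rewrite big_split /= big_ord_recl /= mul1r subn0 [X in _ + X + _]big1 ?addr0; last first.
  by move=> i _; rewrite mul0r.
congr (_ + _).
rewrite -(big_mkord xpredT (fun i => (\sum_(1 <= b < i.+1) \sum_(b.+1 <= a < (2*b).+1)
   c a b * powps u a (i - b)) * powps u r (n - i))).
under eq_big_nat => i Hi.
  rewrite mulr_suml (big_nat_widen _ _ _ _ _ (_ : i.+1 <= n.+1)%N); last by case/andP: Hi.
  over.
rewrite /= (exchange_big_dep_nat xpredT) //=.
apply: eq_big_nat => b /andP [Hb1 Hb2].
rewrite (big_cat_nat (n:=b)) //=; last by zz.
rewrite [X in X + _]big_nat_cond [X in X + _]big1 ?add0r; last first.
  by move=> i /andP[/andP[_ Hi] H]; exfalso; zz.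
rewrite big_nat_condT; last by move=> i /andP [Hi _]; zz.
rewrite [LHS](eq_bigr (fun i => \sum_(b.+1 <= a < (2*b).+1) c a b * powps u a (i - b) * powps u r (n - i))); last by move=> i _; rewrite mulr_suml.
rewrite exchange_big_nat /=.

apply: eq_big_nat => a _.
rewrite -powps_add /mulps mulr_sumr.
rewrite -{1}(add0n b) big_addn big_mkord.
have -> : (n.+1 - b = (n - b).+1)%N by zz.
apply: eq_bigr => i _.
rewrite addnK mulrA; congr (_ * powps u r _). zz.
Qed.

End H.



Section G.
Variable R : realFieldType.
Variable c : nat -> nat -> R.
Variable N : nat.
Local Notation FF := {ffun Idx N -> 'I_N.+1}.
Implicit Types f g : FF.

Definition supp f := [forall p : Idx N, ~~ inI p.1 p.2 ==> (val (f p) == 0%N)].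
Definition wt f := (\sum_(p : Idx N | inI p.1 p.2) p.2 * f p)%N.
Definition As f := (\sum_(p : Idx N | inI p.1 p.2) p.1 * f p)%N.
Definition Ns f := (\sum_(p : Idx N | inI p.1 p.2) f p)%N.
Definition Ls f := (\sum_(p : Idx N | inI p.1 p.2) (p.1 - 1) * f p)%N.
Definition Kp f := (\prod_(p : Idx N | inI p.1 p.2) (f p)`!)%N.
Definition cp f : R := \prod_(p : Idx N | inI p.1 p.2) c p.1 p.2 ^+ f p.
Definition T (r : nat) f : R := if r is r'.+1 then
   (r * (As f + r')`!)%:R / ((Kp f * (Ls f + r)`!)%:R) else (Ns f == 0%N)%:R.
Definition W n := [set f : FF | supp f && (wt f == n)].
Definition G r n := \sum_(f in W n) T r f * cp f.

Definition dec (k : Idx N) f : FF := [ffun p => if p == k then inord (f p).-1 else f p].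
Definition inc (k : Idx N) f : FF := [ffun p => if p == k then inord (f p).+1 else f p].

Lemma inI_ge (p : Idx N) : inI p.1 p.2 -> (1 <= p.2)%N /\ (2 <= p.1)%N.
Proof. rewrite /inI => /andP [H1 /andP [H2 H3]]; split => //; zz. Qed.

Section Dec.
Variable (X : Type) (idx : X) (op : Monoid.com_law idx).

Lemma big_decf (phi : Idx N -> nat -> X) (k : Idx N) f : inI k.1 k.2 ->
  \big[op/idx]_(p : Idx N | inI p.1 p.2) phi p (f p) =
  op (phi k (f k)) (\big[op/idx]_(p : Idx N | inI p.1 p.2 && (p != k)) phi p (f p)).
Proof. by move=> Hk; rewrite (bigD1 k). Qed.

Lemma big_dec (phi : Idx N -> nat -> X) (k : Idx N) f : inI k.1 k.2 ->
  \big[op/idx]_(p : Idx N | inI p.1 p.2) phi p (dec k f p) =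
  op (phi k (f k).-1) (\big[op/idx]_(p : Idx N | inI p.1 p.2 && (p != k)) phi p (f p)).
Proof.
move=> Hk; rewrite (bigD1 k) //= ffunE eqxx inordK; last first.
  by apply: leq_ltn_trans (leq_pred _) (ltn_ord _).
rewrite [X in op _ X](eq_bigr (fun p => phi p (f p))) // => p /andP [_ Hp]; by rewrite ffunE (negbTE Hp).
Qed.
End Dec.

Lemma dec_facts (k : Idx N) f : inI k.1 k.2 -> (0 < f k)%N ->
  [/\ wt f = (k.2 + wt (dec k f))%N, As f = (k.1 + As (dec k f))%N,
      Ns f = (1 + Ns (dec k f))%N, Ls f = ((k.1 - 1) + Ls (dec k f))%N &
      Kp f = (f k * Kp (dec k f))%N].
Proof.
move=> Hk Hf.
have E : f k = (f k).-1.+1 :> nat by rewrite prednK.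
split.
- rewrite /wt (big_decf addn (fun p x => p.2 * x)%N f Hk) (big_dec addn (fun p x => p.2 * x)%N f Hk).
  rewrite addnA; congr (_ + _)%N; rewrite {1}E mulnS //.
- rewrite /As (big_decf addn (fun p x => p.1 * x)%N f Hk) (big_dec addn (fun p x => p.1 * x)%N f Hk).
  rewrite addnA; congr (_ + _)%N; rewrite {1}E mulnS //.
- rewrite /Ns (big_decf addn (fun p x => x)%N f Hk) (big_dec addn (fun p x => x)%N f Hk).
  rewrite addnA; congr (_ + _)%N; rewrite {1}E add1n //.
- rewrite /Ls (big_decf addn (fun p x => (p.1 - 1) * x)%N f Hk) (big_dec addn (fun p x => (p.1 - 1) * x)%N f Hk).
  rewrite addnA; congr (_ + _)%N; rewrite {1}E mulnS //.
- rewrite /Kp (big_decf muln (fun p x => x`!)%N f Hk) (big_dec muln (fun p x => x`!)%N f Hk).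
  rewrite mulnA; congr (_ * _)%N; rewrite {1}E factS -E //.
Qed.

Lemma cp_dec (k : Idx N) f : inI k.1 k.2 -> (0 < f k)%N -> cp f = c k.1 k.2 * cp (dec k f).
Proof.
move=> Hk Hf; have E : f k = (f k).-1.+1 :> nat by rewrite prednK.
rewrite /cp (big_decf (@GRing.mul R) (fun p x => c p.1 p.2 ^+ x) f Hk) (big_dec (@GRing.mul R) (fun p x => c p.1 p.2 ^+ x) f Hk).
by rewrite mulrA {1}E exprS.
Qed.

Lemma inc_dec (k : Idx N) f : (0 < f k)%N -> inc k (dec k f) = f.
Proof.
move=> Hf; apply/ffunP => p; rewrite !ffunE; case: eqP => [->|//].
apply: val_inj => /=; rewrite inordK inordK ?prednK //.
  by apply: ltnW.
by apply: ltnW.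
Qed.

Lemma dec_inc (k : Idx N) f : (f k < N)%N -> dec k (inc k f) = f.
Proof.
move=> Hf; apply/ffunP => p; rewrite !ffunE; case: eqP => [->|//].
apply: val_inj => /=; rewrite inordK inordK //= ltnW //.
Qed.

Lemma inc_k (k : Idx N) f : (f k < N)%N -> inc k f k = (f k).+1 :> nat.
Proof. by move=> H; rewrite ffunE eqxx inordK. Qed.

Lemma inc_k0 (k : Idx N) f : ~~ (f k < N)%N -> inc k f k = 0%N :> nat.
Proof.
move=> H; rewrite ffunE eqxx /inord /insubd insubF //.
by rewrite ltnS (negbTE H).
Qed.

Lemma supp_dec (k : Idx N) f : inI k.1 k.2 -> supp (dec k f) = supp f.
Proof.
move=> Hk; apply/forallP/forallP => H p; have := H p; rewrite !ffunE;
  case: (p =P k) => [->|] //; by rewrite Hk.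
Qed.

Lemma supp_inc (k : Idx N) f : inI k.1 k.2 -> supp (inc k f) = supp f.
Proof.
move=> Hk; apply/forallP/forallP => H p; have := H p; rewrite !ffunE;
  case: (p =P k) => [->|] //; by rewrite Hk.
Qed.

Lemma wt_ge (k : Idx N) f : inI k.1 k.2 -> (k.2 * f k <= wt f)%N.
Proof. by move=> Hk; rewrite /wt (bigD1 k) //= leq_addr. Qed.

Lemma Ns_ge (k : Idx N) f : inI k.1 k.2 -> (f k <= Ns f)%N.
Proof. by move=> Hk; rewrite /Ns (bigD1 k) //= leq_addr. Qed.

Lemma LNA f : (Ls f + Ns f = As f)%N.
Proof.
rewrite /Ls /Ns /As -big_split /=; apply: eq_bigr => p /inI_ge [_ H].
rewrite -{2}(mul1n (f p)) -mulnDl subnK //; by apply: leq_trans H.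
Qed.

Lemma Ns_wt f : (Ns f <= wt f)%N.
Proof. rewrite /Ns /wt; apply: leq_sum => p /inI_ge [H _]; by rewrite leq_pmull. Qed.

Lemma Ns_As f : (Ns f <= As f)%N.
Proof. by rewrite -LNA leq_addl. Qed.

Lemma Ns0 f : Ns f = 0%N -> [/\ forall p : Idx N, inI p.1 p.2 -> f p = 0%N :> nat,
   As f = 0%N, Ls f = 0%N, Kp f = 1%N & cp f = 1].
Proof.
move=> H0; have Hp : forall p : Idx N, inI p.1 p.2 -> f p = 0%N :> nat.
  by move=> p Hp; apply/eqP; rewrite -leqn0 -H0 Ns_ge.
split => //.
- by rewrite /As big1 // => p /Hp ->; rewrite muln0.
- by rewrite /Ls big1 // => p /Hp ->; rewrite muln0.
- by rewrite /Kp big1 // => p /Hp ->.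
- by rewrite /cp big1 // => p /Hp ->; rewrite expr0.
Qed.

Lemma div_scale (x y z : nat) : (0 < z)%N -> (x%:R / y%:R : R) = (z * x)%:R / (z * y)%:R.
Proof.
move=> Hz; rewrite !natrM invfM mulrACA divff ?mul1r //.
by rewrite pnatr_eq0 -lt0n.
Qed.

Lemma Tk (k : Idx N) f r : inI k.1 k.2 -> (0 < f k)%N ->
  T (r + k.1) (dec k f) =
  (f k * ((r + k.1) * ((As f + r).-1)`!))%:R / ((Kp f * (Ls f + r.+1)`!)%:R).
Proof.
move=> Hk Hf; have [Hb Ha] := inI_ge Hk; have [_ HA HN HL HK] := dec_facts Hk Hf.
have E : (r + k.1 = (r + k.1).-1.+1)%N by rewrite prednK //; zz.
rewrite {1}E /T -E.
have -> : (As (dec k f) + (r + k.1).-1 = (As f + r).-1)%N by rewrite HA; zz.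
have -> : (Ls (dec k f) + (r + k.1) = Ls f + r.+1)%N by rewrite HL; zz.
by rewrite HK (div_scale _ _ Hf) -mulnA.
Qed.

Lemma sum_rk r f Z : (\sum_(k : Idx N | inI k.1 k.2) f k * ((r + k.1) * Z))%N =
   ((r * Ns f + As f) * Z)%N.
Proof.
rewrite /Ns /As big_distrr /= -big_split /= big_distrl /=; apply: eq_bigr => k _.
zzn.
Qed.

Lemma T_rec r f : T r.+1 f = T r f +
  \sum_(k : Idx N | inI k.1 k.2 && (0 < f k)%N) T (r + k.1) (dec k f).
Proof.
rewrite (eq_bigr (fun k : Idx N => (f k * ((r + k.1) * ((As f + r).-1)`!))%:R /
   ((Kp f * (Ls f + r.+1)`!)%:R))); last by move=> k /andP [Hk Hf]; rewrite Tk.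
rewrite -mulr_suml -natr_sum.
rewrite (_ : (\sum_(k : Idx N | inI k.1 k.2 && (0 < f k)%N) _)%N =
   (\sum_(k : Idx N | inI k.1 k.2) f k * ((r + k.1) * ((As f + r).-1)`!))%N); last first.
  rewrite big_mkcondr /=; apply: eq_bigr => k _.
  by case: posnP => // ->.
rewrite sum_rk.
have HLNA := LNA f.
case: r => [|r].
  rewrite /T; case: eqP => [/Ns0 [_ HA HL HK _]|HN].
    by rewrite HA HL HK /= mul0r addr0 divr1.
  have HA : (0 < As f)%N by apply: leq_trans (Ns_As f); rewrite lt0n; apply/eqP.
  rewrite add0r mul0n add0n !addn0 mul1n; congr (_%:R / _).
  by rewrite -{1}(prednK HA) factS prednK.
rewrite {2}/T (div_scale _ _ (_ : 0 < Ls f + r.+2)%N) //; last by zz.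
rewrite /T [X in _ / (X%:R) + _]mulnCA !(addnS (Ls f) r.+1) -factS -mulrDl -natrD; congr (_%:R / _).
rewrite (addnS (As f) r) factS /= -HLNA; zzn.
Qed.

Lemma idx_sum (F : nat -> nat -> R) n : (n <= N)%N ->
  \sum_(k : Idx N | inI k.1 k.2 && (k.2 <= n)%N) F k.1 k.2 =
  \sum_(1 <= b < n.+1) \sum_(b.+1 <= a < (2*b).+1) F a b.
Proof.
move=> HnN.
rewrite /Idx -(pair_big_dep xpredT (fun (a : 'I_(2 * N).+1) (b : 'I_N.+1) => inI a b && (b <= n)%N)
   (fun (a : 'I_(2 * N).+1) (b : 'I_N.+1) => F a b)) /=.
rewrite (exchange_big_dep xpredT) //=.
rewrite (eq_bigr (fun b : 'I_N.+1 => if (0 < b <= n)%N then \sum_(b.+1 <= a < (2*b).+1) F a b else 0)); last first.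
  move=> b _; case: ifP => Hb; last first.
    rewrite big_pred0 // => a /=; apply/negbTE; apply: contraFN Hb.
    by case/andP => /andP [-> _] ->.
  rewrite -(big_mkord (fun a => inI a b && (b <= n)%N) (fun a => F a b)).
  rewrite (big_nat_widenl b.+1 0) //.
  rewrite (eq_bigl (fun a => (b < a)%N && (a < (2 * b).+1)%N)); last first.
    by move=> a; rewrite /inI; case/andP: Hb => -> ->; rewrite andbT.
  rewrite -(big_nat_widen 0 (2 * b).+1 (2 * N).+1 (fun a => (b < a)%N)); last first.
    case/andP: Hb => _ Hb; zz.
  by apply: eq_bigl => a.
rewrite -big_mkcond /= [RHS](big_nat_widenl 1 0) // [RHS](big_nat_widen _ _ N.+1) //.
rewrite [RHS]big_mkord; apply: eq_bigl => j /=; by rewrite ltnS.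
Qed.

Lemma G0 n : G 0 n = (n == 0%N)%:R.
Proof.
case: n => [|n].
  pose f0 : FF := [ffun => ord0].
  have Hsupp0 : supp f0 by apply/forallP => p; rewrite ffunE /= eqxx implybT.
  have Hwt0 : wt f0 = 0%N by rewrite /wt big1 // => p _; rewrite ffunE muln0.
  rewrite /G (big_pred1 f0).
    have HN : Ns f0 = 0%N by rewrite /Ns big1 // => p _; rewrite ffunE.
    have [_ _ _ _ ->] := Ns0 HN.
    by rewrite /T HN mulr1.
  move=> f /=; rewrite inE; apply/idP/eqP => [/andP [Hs Hw]|->]; last by rewrite Hsupp0 Hwt0.
  apply/ffunP => p; rewrite ffunE; apply: val_inj => /=.
  case: (boolP (inI p.1 p.2)) => Hp.
    have := wt_ge f Hp; rewrite (eqP Hw) leqn0 muln_eq0 => /orP [|/eqP //].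
    by have [H1 _] := inI_ge Hp; rewrite eqn0Ngt H1.
  by have := forallP Hs p; rewrite Hp /= => /eqP.
rewrite /G big1 // => f; rewrite inE => /andP [Hs Hw].
rewrite /T; case: eqP => [/Ns0 [Hp _ _ _ _]|]; last by rewrite mul0r.
move: Hw; rewrite /wt big1 // => p /Hp ->; by rewrite muln0.
Qed.

Lemma G_rec r n : (n <= N)%N -> G r.+1 n = G r n +
  \sum_(1 <= b < n.+1) \sum_(b.+1 <= a < (2*b).+1) c a b * G (a + r)%N (n - b)%N.
Proof.
move=> HnN.
rewrite -(idx_sum (fun a b => c a b * G (a + r)%N (n - b)%N) HnN) {1 2}/G.
rewrite (eq_bigr (fun f => T r f * cp f + \sum_(k : Idx N | inI k.1 k.2 && (0 < f k)%N)
    T (r + k.1) (dec k f) * cp f)); last first.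
  by move=> f _; rewrite T_rec mulrDl mulr_suml.
rewrite big_split /=; congr (_ + _).
rewrite (exchange_big_dep (fun k : Idx N => inI k.1 k.2)) /=; last by move=> f k _ /andP[].
rewrite [RHS]big_mkcondr /=; apply: eq_bigr => k Hk.
have [Hb Ha] := inI_ge Hk.
case: ifP => Hkn; last first.
  rewrite big_pred0 // => f; apply/negP => /andP [Hf /andP [_ Hfk]].
  move: Hf; rewrite inE => /andP [_ /eqP Hw].
  have H1 := leq_trans (leq_pmulr k.2 Hfk) (wt_ge f Hk); rewrite Hw in H1.
  by rewrite H1 in Hkn.
rewrite (@reindex_onto _ _ _ FF FF (inc k) (dec k)) /=; last first.
  by move=> f /andP [_ /andP [_ Hf]]; rewrite inc_dec.
rewrite /G mulr_sumr; apply: eq_big => g.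
  case: (ltnP (g k) N) => Hg.
    rewrite inc_k // dec_inc // eqxx Hk andbT /= !inE supp_inc //.
    have Hpos : (0 < inc k g k)%N by rewrite inc_k.
    have [Hw _ _ _ _] := dec_facts Hk Hpos.
    rewrite Hw dec_inc //.
    case: (supp g) => //=; rewrite ltn0Sn andbT; apply/eqP/eqP => H; move: Hkn; zz.
  have Hg' : ~~ (g k < N)%N by rewrite -leqNgt.
  have Hz := inc_k0 Hg'.
  rewrite Hz ltnn !andbF andFb; symmetry; apply/negbTE/negP; rewrite inE => /andP [_ /eqP Hw].
  have H1 := leq_trans (leq_pmull (g k) Hb) (wt_ge g Hk); rewrite Hw in H1.
  have H3 : (n - k.2 < n)%N by rewrite ltn_subrL Hb (leq_trans Hb Hkn).
  have := leq_ltn_trans (leq_trans Hg H1) H3; by rewrite ltnNge HnN.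
case/andP => /andP [_ /andP [_ Hpos]] /eqP Hdec.
rewrite Hdec (cp_dec Hk Hpos) Hdec addnC mulrCA //.
Qed.

End G.



Lemma HG (R : realFieldType) (c : nat -> nat -> R) (alpha : nat -> R) (N : nat) :
  solves_eq c alpha -> forall M r n, (2 * n + r <= M)%N -> (n <= N)%N ->
  powps (ush alpha) r n = G c N r n.
Proof.
move=> Hs; elim=> [|M IH] [|r] n HM HnN.
- by rewrite G0.
- by move: HM; zz.
- by rewrite G0.
rewrite (H_rec Hs) G_rec //; congr (_ + _).
  by apply: IH => //; zz.
apply: eq_big_nat => b /andP [Hb1 Hb2]; apply: eq_big_nat => a /andP [Ha1 Ha2].
congr (_ * _); apply: IH; zz.
Qed.

Theorem lemma2 (R : realFieldType) (c : nat -> nat -> R) (alpha : nat -> R) :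
  solves_eq c alpha ->
  forall n : nat, (1 <= n)%N -> alpha n = alpha_formula c n.
Proof.
move=> Hs n Hn.
have -> : alpha n = powps (ush alpha) 1 n.-1.
  by rewrite /= mulps1 /ush prednK.
rewrite (HG (N := n) Hs (M := (2 * n)%N)); last by zz.
  2: by zz.
rewrite /G /alpha_formula; apply: eq_big => f.
  rewrite !inE /supp; congr (_ && _).
  change ((wt f == n.-1) = ((1 + wt f)%N == n)).
  by apply/eqP/eqP => H; move: Hn; zz.
move=> _; rewrite /T mul1n addn0 natrM addnC.
by [].
Qed.
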